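(* Let $\mathcal{O}$ be an order of $K$ and let $(r,\tau),(r',\tau')\in\mathbb{Z}/f\mathbb{Z}\times H^{\mathcal{O}}(\mathfrak{N})$. Put $\tau^*=\frac{-1}{fN\tau}$ and $\tau'^*=\frac{-1}{fN\tau'}$. Then $(r,\tau)\sim_f(r',\tau')$ if and only if $(r',\tau^* )\sim_f(r,\tau'^* )$.
   Context: $K$ real quadratic with discriminant $d_K$ and nontrivial automorphism $\sigma$; $N=\prod l_i^{e_i}$ with $l_i$ distinct primes split in $K$; $\mathfrak{N}=\prod\eta_i^{e_i}$ with $\eta_i$ a prime of $\mathcal{O}_K$ above $l_i$; $f$ a positive integer coprime to $Nd_K$. $\Lambda_\tau=\mathbb{Z}+\tau\mathbb{Z}$, $\mathcal{O}_\tau=\{\lambda\in K:\lambda\Lambda_\tau\subseteq\Lambda_\tau\}$. Product convention: $\mathfrak{N}\Lambda_\tau$ means $(\mathfrak{N}\cap\mathcal{O}_\tau)\Lambda_\tau$. $H(\mathfrak{N})=\{\tau\in K:\mathfrak{N}\Lambda_\tau=\Lambda_{N\tau},\ \tau-\tau^\sigma>0\}$ and $H^{\mathcal{O}}(\mathfrak{N})=\{\tau\in H(\mathfrak{N}):\mathcal{O}_\tau=\mathcal{O}\}$. For $(r,\tau),(r',\tau')\in\mathbb{Z}/f\mathbb{Z}\times(K\setminus\mathbb{Q})$, $(r,\tau)\sim_f(r',\tau')$ means there is $\gamma=\begin{pmatrix}a&b\\c&d\end{pmatrix}\in\Gamma_0(fN)$ with $d^{-1}r\equiv r'\pmod f$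 and $\tau'=\frac{a\tau+b}{c\tau+d}$. *)

(* Defs.v *)
(* The real quadratic field K is modelled concretely as
   Q(sqrt D), D a squarefree integer > 1; an element a + b sqrt D is the
   pair (a, b) : rat * rat. The real embedding is the one with sqrt D > 0. *)
From mathcomp Require Import all_boot all_order all_algebra.
Set Implicit Arguments. Unset Strict Implicit. Unset Printing Implicit Defensive.
Import Order.TTheory GRing.Theory Num.Theory.
Local Open Scope ring_scope.

Definition qK := (rat * rat)%type.
Definition kset := qK -> Prop.

Definition kofZ (m : int) : qK := (m%:~R, 0).
Definition kzero : qK := (0, 0).
Definition kone : qK := (1, 0).
Definition kadd (x y : qK) : qK := (x.1 + y.1, x.2 + y.2).
Definition kopp (x : qK) : qK := (- x.1, - x.2).
Definition kmul (D : nat) (x y : qK) : qK :=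
  (x.1 * y.1 + D%:R * x.2 * y.2, x.1 * y.2 + x.2 * y.1).
(* field norm, inverse (0 maps to 0), Galois conjugation sigma *)
Definition knorm (D : nat) (x : qK) : rat := x.1 ^+ 2 - D%:R * x.2 ^+ 2.
Definition kinv (D : nat) (x : qK) : qK :=
  (x.1 / knorm D x, - x.2 / knorm D x).
Definition kconj (x : qK) : qK := (x.1, - x.2).
(* x > 0 in the real embedding with sqrt D > 0 *)
Definition kpos (D : nat) (x : qK) : Prop :=
  if 0 <= x.2 then (0 < x.1) \/ (x.1 ^+ 2 < D%:R * x.2 ^+ 2)
  else (0 < x.1) /\ (D%:R * x.2 ^+ 2 < x.1 ^+ 2).

Definition moeb (D : nat) (a b c d : int) (t : qK) : qK :=
  kmul D (kadd (kmul D (kofZ a) t) (kofZ b))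
         (kinv D (kadd (kmul D (kofZ c) t) (kofZ d))).

Definition squarefree (n : nat) : Prop := forall p, prime p -> ~~ (p ^ 2 %| n)%N.
Definition dK (D : nat) : nat := if (D %% 4 == 1)%N then D else (4 * D)%N.

(* ring of integers O_K: elements with integral trace and norm *)
Definition OK (D : nat) : kset := fun x =>
  (2 * x.1 \is a Num.int) /\ (knorm D x \is a Num.int).

Definition ksum (s : seq qK) : qK := foldr kadd kzero s.
Definition smul (D : nat) (A B : kset) : kset := fun z =>
  exists s : seq (qK * qK),
    (forall p, p \in s -> A p.1 /\ B p.2) /\
    z = ksum [seq kmul D p.1 p.2 | p <- s].
Definition seteq (A B : kset) : Prop := forall x, A x <-> B x.
Definition setI (A B : kset) : kset := fun x => A x /\ B x.

Definition is_ideal (D : nat) (I : kset) : Prop :=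
  (forall x, I x -> OK D x) /\ I kzero /\
  (forall x y, I x -> I y -> I (kadd x y)) /\
  (forall x y, OK D x -> I y -> I (kmul D x y)).
Definition is_prime_ideal (D : nat) (P : kset) : Prop :=
  is_ideal D P /\ ~ P kone /\
  (forall x y, OK D x -> OK D y -> P (kmul D x y) -> P x \/ P y).
Definition ipow (D : nat) (I : kset) (e : nat) : kset :=
  iter e (smul D I) (OK D).
Definition lOK (D : nat) (l : nat) : kset :=
  smul D (fun x => x = kofZ l%:Z) (OK D).
Definition splits (D : nat) (l : nat) : Prop :=
  exists P Q : kset, is_prime_ideal D P /\ is_prime_ideal D Q /\
    ~ seteq P Q /\ seteq (lOK D l) (smul D P Q).

Definition Lam (D : nat) (t : qK) : kset := fun x =>
  exists m n : int, x = kadd (kofZ m) (kmul D (kofZ n) t).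
Definition Otau (D : nat) (t : qK) : kset := fun lam =>
  forall x, Lam D t x -> Lam D t (kmul D lam x).
Definition is_order (D : nat) (O : kset) : Prop :=
  O kone /\ (forall x y, O x -> O y -> O (kmul D x y)) /\
  exists w1 w2 : qK, w1.1 * w2.2 - w1.2 * w2.1 != 0 /\
    forall x, O x <-> exists m n : int,
      x = kadd (kmul D (kofZ m) w1) (kmul D (kofZ n) w2).

(* H(Nfrak) and H^O(Nfrak); N Lambda_tau means (Nfrak cap O_tau) Lambda_tau *)
Definition inH (D N : nat) (Nf : kset) (t : qK) : Prop :=
  seteq (smul D (setI Nf (Otau D t)) (Lam D t)) (Lam D (kmul D (kofZ N%:Z) t))
  /\ kpos D (kadd t (kopp (kconj t))).
Definition inHO (D N : nat) (Nf O : kset) (t : qK) : Prop :=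
  inH D N Nf t /\ seteq (Otau D t) O.

(* (r,t) ~_f (r',t'): exists gamma in Gamma_0(fN) with d^{-1} r = r' mod f
   and t' = gamma t. Classes of Z/fZ are represented by integers. *)
Definition simf (D f N : nat) (r : int) (t : qK) (r' : int) (t' : qK) : Prop :=
  exists a b c d : int,
    a * d - b * c = 1 /\ ((f * N)%N%:Z %| c)%Z /\
    (exists u : int, (u * d == 1 %[mod f%:Z])%Z && (u * r == r' %[mod f%:Z])%Z) /\
    t' = moeb D a b c d t.

Definition tstar (D f N : nat) (t : qK) : qK :=
  kopp (kinv D (kmul D (kofZ (f * N)%N%:Z) t)).

(* Main.v *)
Require Import Defs.
From mathcomp Require Import all_boot all_order all_algebra all_field.
From mathcomp Require Import ring lra zify.
Import Order.TTheory GRing.Theory Num.Theory.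
Local Open Scope ring_scope.
Lemma rat_sq_neq (D : nat) : (1 < D)%N -> squarefree D -> forall x : rat, x ^+ 2 != D%:R.
Proof.
move=> D1 sqf x; apply/eqP=> hx.
have hd : (denq x)%:~R != 0 :> rat by rewrite intr_eq0 denq_neq0.
have E0 : (numq x)%:~R ^+ 2 = D%:R * (denq x)%:~R ^+ 2 :> rat.
  have hxe : x = (numq x)%:~R / (denq x)%:~R by rewrite divq_num_den.
  rewrite -hx {2}hxe; field; exact: hd.
have E : (numq x ^+ 2 = D%:Z * denq x ^+ 2)%R.
  apply: (@intr_inj rat); rewrite rmorphXn rmorphM /= rmorphXn; exact: E0.
have En : (`|numq x| ^ 2 = D * `|denq x| ^ 2)%N.
  by have := congr1 absz E; rewrite abszX abszM abszX.
have dg : (0 < `|denq x|)%N by rewrite absz_gt0 denq_neq0.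
have ng : (0 < `|numq x|)%N.
  rewrite lt0n; apply/negP=> /eqP h0; move: En; rewrite h0 exp0n //.
  move=> /esym /eqP; rewrite muln_eq0 expn_eq0 /=; case/orP=> /eqP; lia.
set p := pdiv D.
have pp : prime p by exact: pdiv_prime.
have lD : logn p D = 1%N.
  have h1 : (1 <= logn p D)%N by rewrite -pfactor_dvdn // ?expn1 ?pdiv_dvd //; lia.
  have h2 : ~~ (2 <= logn p D)%N by rewrite -pfactor_dvdn //; [exact: sqf | lia].
  lia.
have := congr1 (logn p) En.
rewrite lognM ?expn_gt0 ?dg ?orbT //; last lia.
rewrite !lognX lD; lia.
Qed.

Section Phi.
Variable D : nat.
Hypothesis D1 : (1 < D)%N.
Hypothesis sqf : squarefree D.
Definition sD : algC := sqrtC (D%:R).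
Lemma sD2 : sD ^+ 2 = D%:R. Proof. exact: sqrtCK. Qed.
Definition phi (x : qK) : algC := ratr x.1 + ratr x.2 * sD.

Lemma sD_irr (x : rat) : ratr x != sD.
Proof.
apply/eqP=> h; have := @rat_sq_neq D D1 sqf x; rewrite -(inj_eq (fmorph_inj (@ratr algC))).
by rewrite rmorphXn /= h sD2 rmorph_nat eqxx.
Qed.

Lemma two_zero (u v : rat) : ratr u + ratr v * sD = 0 -> u = 0 /\ v = 0.
Proof.
move=> h; have [v0|vn0] := eqVneq v 0.
  move: h; rewrite v0 rmorph0 mul0r addr0 => /eqP; rewrite fmorph_eq0 => /eqP; by [].
exfalso; have := sD_irr (- u / v); rewrite fmorph_div /= rmorphN.
have hv : ratr v != 0 :> algC by rewrite fmorph_eq0.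
have -> : sD = - ratr u / ratr v.
  have e : ratr v * sD = - ratr u.
    by apply/eqP; rewrite -subr_eq0 opprK addrC h.
  by rewrite -e [ratr v * _]mulrC mulfK.
by rewrite eqxx.
Qed.

Lemma phi_inj x y : phi x = phi y -> x = y.
Proof.
move=> h; have [] := @two_zero (x.1 - y.1) (x.2 - y.2).
  have -> : ratr (x.1 - y.1) + ratr (x.2 - y.2) * sD = phi x - phi y.
    by rewrite /phi !rmorphB /=; ring.
  by rewrite h subrr.
move=> /eqP; rewrite subr_eq0 => /eqP h1 /eqP; rewrite subr_eq0 => /eqP h2.
by case: x y h h1 h2 => [? ?] [? ?] /= _ -> ->.
Qed.

Lemma phi_add x y : phi (kadd x y) = phi x + phi y.
Proof. rewrite /phi /= !rmorphD /=; ring. Qed.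
Lemma phi_opp x : phi (kopp x) = - phi x.
Proof. rewrite /phi /= !rmorphN /=; ring. Qed.
Lemma phi_mul x y : phi (kmul D x y) = phi x * phi y.
Proof. rewrite /phi /= !rmorphD !rmorphM /= rmorph_nat -sD2; ring. Qed.
Lemma phi_ofZ m : phi (kofZ m) = m%:~R.
Proof. by rewrite /phi /= rmorph0 mul0r addr0 rmorph_int. Qed.
Lemma phi0 : phi kzero = 0.
Proof. by rewrite /phi /= rmorph0 mul0r addr0. Qed.

Lemma phi_inv x : phi (kinv D x) = (phi x)^-1.
Proof.
have [->|xn0] := eqVneq x kzero.
  rewrite phi0 invr0 -phi0; congr phi; rewrite /kinv /knorm /=; congr pair; rewrite /= ?oppr0 ?mul0r //.
have px : phi x != 0 by apply: contra xn0 => /eqP h; apply/eqP/phi_inj; rewrite h phi0.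
have nn : ratr (knorm D x) != 0 :> algC.
  rewrite fmorph_eq0 /knorm subr_eq0; apply/eqP=> hn.
  have [x20|x2n] := eqVneq x.2 0.
    move: hn; rewrite x20 expr0n mulr0 /= => /eqP; rewrite expf_eq0 /= => /eqP h1.
    by move: xn0; clear px; case: x x20 h1 => [? ?] /= -> ->; rewrite eqxx.
  have := @rat_sq_neq D D1 sqf (x.1 / x.2); rewrite expr_div_n hn; apply/negP/negPn.
  by rewrite mulfK ?expf_neq0.
have e : phi x * phi (kinv D x) = 1.
  move: nn; rewrite /phi /kinv /knorm /= !(fmorphV, rmorphB, rmorphM, rmorphN, rmorphXn, fmorph_div) /=.
  rewrite rmorph_nat -sD2 => nn. field; exact: nn.
by rewrite -[RHS]mulr1 -e mulrA mulVf // mul1r.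
Qed.


Lemma lin_neq0 t (p q : int) : t.2 != 0 -> (p != 0) || (q != 0) ->
  p%:~R * phi t + q%:~R != 0.
Proof.
move=> t2 pq; apply/eqP=> h.
have [] := @two_zero (p%:~R * t.1 + q%:~R) (p%:~R * t.2).
  by rewrite rmorphD !rmorphM /= !rmorph_int -h /phi; ring.
move=> h1 /eqP; rewrite mulf_eq0 (negbTE t2) orbF intr_eq0 => /eqP p0.
move: h1; rewrite p0 mul0r add0r => /eqP; rewrite intr_eq0 => /eqP q0.
by move: pq; rewrite p0 q0 eqxx.
Qed.

Definition tstarM (M : int) t := kopp (kinv D (kmul D (kofZ M) t)).
Lemma phi_tstar M t : phi (tstarM M t) = - (M%:~R * phi t)^-1.
Proof. by rewrite /tstarM phi_opp phi_inv phi_mul phi_ofZ. Qed.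
Lemma phi_moeb a b c d t : phi (moeb D a b c d t) =
  (a%:~R * phi t + b%:~R) / (c%:~R * phi t + d%:~R).
Proof. by rewrite /moeb phi_mul phi_inv !phi_add !phi_mul !phi_ofZ. Qed.

Lemma fwd_eq (M a b c0 d : int) t t' : M != 0 -> t.2 != 0 ->
  a * d - b * (c0 * M) = 1 -> t' = moeb D a b (c0 * M) d t ->
  tstarM M t' = moeb D d (- c0) (- (M * b)) a (tstarM M t).
Proof.
move=> M0 t2 det e; apply: phi_inj.
rewrite phi_tstar !phi_moeb e phi_tstar phi_moeb !rmorphN !rmorphM /=.
have T0 : phi t != 0 by have := @lin_neq0 t 1 0 t2; rewrite oner_eq0 /= mul1r addr0; apply.
have hab : a%:~R * phi t + b%:~R != 0.
  apply: lin_neq0 => //; rewrite -negb_and; apply/negP => /andP[/eqP a0 /eqP b0].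
  by move: det; rewrite a0 b0 !mul0r subr0.
have hcd : (c0 * M)%:~R * phi t + d%:~R != 0.
  apply: lin_neq0 => //; rewrite -negb_and; apply/negP => /andP[/eqP a0 /eqP b0].
  by move: det; rewrite a0 b0 !mulr0 subr0.
rewrite rmorphM /= in hcd.
have M0' : M%:~R != 0 :> algC by rewrite intr_eq0.
field.
rewrite T0 M0' hcd hab /= andbT.
have -> : - (M%:~R * b%:~R) * -1 + a%:~R * (M%:~R * phi t) =
  M%:~R * (a%:~R * phi t + b%:~R) :> algC by ring.
by rewrite mulf_neq0.
Qed.

Lemma bwd_eq (M a b c0 d : int) t t' : M != 0 -> t.2 != 0 -> t'.2 != 0 ->
  a * d - b * (c0 * M) = 1 -> tstarM M t' = moeb D a b (c0 * M) d (tstarM M t) ->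
  t' = moeb D d (- c0) (- (M * b)) a t.
Proof.
move=> M0 t2 t2' det e; apply: phi_inj.
have T0 : phi t != 0 by have := @lin_neq0 t 1 0 t2; rewrite oner_eq0 /= mul1r addr0; apply.
have T0' : phi t' != 0 by have := @lin_neq0 t' 1 0 t2'; rewrite oner_eq0 /= mul1r addr0; apply.
have M0' : M%:~R != 0 :> algC by rewrite intr_eq0.
have h1 : phi t' = - (M%:~R * (- (M%:~R * phi t')^-1))^-1 by field; rewrite ?T0' ?M0'.
have := congr1 phi e; rewrite phi_tstar phi_moeb phi_tstar => e'.
rewrite h1 e' phi_moeb !rmorphN !rmorphM /=.
have hdc : d%:~R * phi t + (- c0)%:~R != 0.
  apply: lin_neq0 => //; rewrite -negb_and; apply/negP => /andP[/eqP a0 /eqP b0].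
  nia.
have hba : (b * M)%:~R * phi t + (- a)%:~R != 0.
  apply: lin_neq0 => //; rewrite -negb_and; apply/negP => /andP[/eqP a0 /eqP b0].
  have a00 : a = 0 by lia.
  by move: det; rewrite a00 mul0r mulrCA a0 mulr0 subr0.
have hma : (- (M * b))%:~R * phi t + a%:~R != 0.
  apply: lin_neq0 => //; rewrite -negb_and; apply/negP => /andP[/eqP a0 /eqP b0].
  have bM : M * b = 0 by lia.
  by move: det; rewrite b0 mul0r (mulrC c0) mulrA (mulrC b) bM !mul0r subr0.
rewrite !rmorphN !rmorphM /= in hdc hba hma.
field.
rewrite hma T0 M0' /=.
have -> : c0%:~R * -1 + d%:~R * phi t = d%:~R * phi t - c0%:~R :> algC by ring.
have -> : a%:~R * -1 + b%:~R * (M%:~R * phi t) = b%:~R * M%:~R * phi t - a%:~R :> algC by ring.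
by rewrite hdc hba.
Qed.
End Phi.

Lemma t2_nz (D : nat) t : kpos D (kadd t (kopp (kconj t))) -> t.2 != 0.
Proof.
move=> h; apply/eqP=> t20; move: h; rewrite /kpos /= t20 !oppr0 !addr0 subrr.
rewrite lexx expr0n /= mulr0 ltxx; by case=> /negP; rewrite ?ltxx.
Qed.

Lemma arith (f : nat) (M a b c0 d u r r' : int) : (f%:Z %| M)%Z ->
  a * d - b * (c0 * M) = 1 -> (u * d == 1 %[mod f%:Z])%Z -> (u * r == r' %[mod f%:Z])%Z ->
  (d * a == 1 %[mod f%:Z])%Z && (d * r' == r %[mod f%:Z])%Z.
Proof.
move=> /dvdzP[m ->] det; rewrite !eqz_mod_dvd => h1 h2; apply/andP; split.
  apply/dvdzP; exists (b * c0 * m). by rewrite -det; ring.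
have -> : d * r' - r = (u * d - 1) * r - d * (u * r - r') by ring.
by apply: rpredB; [exact: dvdz_mulr | exact: dvdz_mull].
Qed.

Theorem lemma9p1 (D : nat) (k : nat) (l e : nat -> nat) (eta : nat -> kset)
  (N : nat) (Nf : kset) (f : nat) (O : kset)
  (r r' : int) (t t' : qK) :
  (1 < D)%N -> squarefree D ->
  (forall i, (i < k)%N -> prime (l i) /\ (0 < e i)%N /\ splits D (l i) /\
     is_prime_ideal D (eta i) /\ eta i (kofZ (l i)%:Z)) ->
  (forall i j, (i < k)%N -> (j < k)%N -> l i = l j -> i = j) ->
  N = (\prod_(i < k) l i ^ e i)%N ->
  seteq Nf (foldr (fun i J => smul D (ipow D (eta i) (e i)) J) (OK D) (iota 0 k)) ->
  (0 < f)%N -> coprime f (N * dK D) ->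
  is_order D O ->
  inHO D N Nf O t -> inHO D N Nf O t' ->
  (simf D f N r t r' t' <-> simf D f N r' (tstar D f N t) r (tstar D f N t')).

Proof.
move=> D1 sqf hl hinj hN hNf f0 cop ord [[_ tp] _] [[_ tp'] _].
have t2 := @t2_nz D _ tp; have t2' := @t2_nz D _ tp'.
set M := ((f * N)%N%:Z).
have N0 : (0 < N)%N.
  rewrite hN; apply: prodn_gt0 => i; rewrite expn_gt0.
  by have [pl _] := hl i (ltn_ord i); rewrite prime_gt0.
have M0 : M != 0 by rewrite /M eqz_nat muln_eq0 negb_or -!lt0n f0 N0.
have fM : (f%:Z %| M)%Z by apply/dvdzP; exists N%:Z; rewrite /M PoszM mulrC.
split.
- case=> a [b [c [d [det [dvc [[u /andP[h1 h2]] et]]]]]].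
  case/dvdzP: dvc => c0 ec; rewrite -/M in ec; subst c.
  exists d, (-c0), (-(M*b)), a; split; first by rewrite -det; ring.
  split; first by apply/dvdzP; exists (-b); ring.
  split; first by exists d; exact: (@arith _ _ _ _ _ _ _ _ _ fM det h1 h2).
  exact: (@fwd_eq D D1 sqf M a b c0 d t t' M0 t2 det et).
- case=> a [b [c [d [det [dvc [[u /andP[h1 h2]] et]]]]]].
  case/dvdzP: dvc => c0 ec; rewrite -/M in ec; subst c.
  exists d, (-c0), (-(M*b)), a; split; first by rewrite -det; ring.
  split; first by apply/dvdzP; exists (-b); ring.
  split; first by exists d; exact: (@arith _ _ _ _ _ _ _ _ _ fM det h1 h2).
  exact: (@bwd_eq D D1 sqf M a b c0 d t t' M0 t2 t2' det et).
Qed.
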